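(* Let $G$ be a finite group. If $OD(G)$ contains a cycle, then the girth of $OD(G)$ equals $3$.
   Context: For a finite group $G$, $o(x)$ denotes the order of $x\in G$. The order-divisor graph $OD(G)$ is the simple undirected graph with vertex set $G$, in which two distinct vertices $x,y$ are adjacent if and only if $o(x)\neq o(y)$ and either $o(x)\mid o(y)$ or $o(y)\mid o(x)$. The girth $g(\Gamma)$ of a graph $\Gamma$ is the length of a shortest cycle in $\Gamma$. *)

(* Defs.v *)
From mathcomp Require Import all_boot all_fingroup.
Set Implicit Arguments. Unset Strict Implicit. Unset Printing Implicit Defensive.

Local Open Scope group_scope.

Definition od_adj (gT : finGroupType) : rel gT :=
  fun x y => [&& x != y, #[x] != #[y] & (#[x] %| #[y]) || (#[y] %| #[x])].

(* Its length is the number of vertices (= number of edges). *)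
Definition od_cycle (gT : finGroupType) (G : {group gT}) (s : seq gT) : Prop :=
  [/\ 3 <= size s, uniq s, all (fun x => x \in G) s & path.cycle (@od_adj gT) s].

Definition od_girth_is (gT : finGroupType) (G : {group gT}) (n : nat) : Prop :=
  (exists2 s, od_cycle G s & size s = n) /\
  (forall s, od_cycle G s -> n <= size s).

(* Main.v *)
Require Import Defs.
From mathcomp Require Import all_boot all_fingroup.
Set Implicit Arguments. Unset Strict Implicit.

Local Open Scope group_scope.

Lemma adj1 (gT : finGroupType) (x : gT) : x != 1 -> od_adj 1 x && od_adj x 1.
Proof.
move=> hx; rewrite /od_adj order1 [1 == x]eq_sym hx [(1 == #[x])%N]eq_sym.
by rewrite order_eq1 hx /= dvd1n orbT.
Qed.

Lemma tri (gT : finGroupType) (G : {group gT}) (x y : gT) :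
  x \in G -> y \in G -> od_adj x y -> x != 1 -> y != 1 -> od_girth_is G 3.
Proof.
move=> xG yG hxy hx hy; split; last by move=> s [].
exists [:: 1; x; y] => //; split => //.
- rewrite /= !inE negb_or [1 == x]eq_sym hx [1 == y]eq_sym hy /= andbT.
  by case/and3P: hxy.
- by rewrite /= group1 xG yG.
- case/andP: (adj1 hx) => h1 _; case/andP: (adj1 hy) => _ h2.
  by rewrite /= h1 hxy h2.
Qed.

Theorem mainTheorem3 (gT : finGroupType) (G : {group gT}) :
  (exists s, od_cycle G s) -> od_girth_is G 3.
Proof.
case=> [[|a [|b [|c rest]]]] [] //= _ hu hall hcyc.
case/and4P: hu; rewrite !inE !negb_or => /and3P[hab hac hua] /andP[hbc hub] _ _.
case/and4P: hall => aG bG cG restG.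
case/and3P: hcyc => hab' hbc' hrest.
case: (eqVneq b 1) => [eb|nb].
- subst b.
  have nc : c != 1 by rewrite eq_sym.
  case: rest hrest restG hua hub => [|d rest'] /=.
  + move=> /andP[hca _] _ _ _; apply: (@tri _ G c a) => //; by rewrite eq_sym.
  + move=> /andP[hcd _] /andP[dG _] _; rewrite !inE !negb_or => /andP[hd _].
    apply: (@tri _ G c d) => //; by rewrite eq_sym.
- case: (eqVneq a 1) => [ea|na].
  + subst a; apply: (@tri _ G b c) => //; by rewrite eq_sym.
  + exact: (@tri _ G a b).
Qed.
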